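(* Let $k\ge1$, let $A_k$ be the matrix defined below, and let $\mathbf{b}=(\mathbf{w}_1,\mathbf{w}_2,c)^{\mathsf T}\in\mathbb{Z}^{2k+1}$ with $\mathbf{w}_1,\mathbf{w}_2\in\mathbb{Z}^k$, $c\in\mathbb{Z}$, such that $\mathcal{F}_{A_k}(\mathbf{b})\neq\emptyset$. Consider the fiber graph $G=G_{A_k,\mathbf{b},\mathcal{G}(A_k)}$ and let $s\in[l(\mathbf{b}),u(\mathbf{b})]$ be an integer. Then a vertex $\mathbf{v}\in C_s(\mathbf{b})$ has a neighbor in $C_{s-1}(\mathbf{b})$ if and only if $s>l(\mathbf{b})$, and in this case it has at least $2^k$ neighbors in $C_{s-1}(\mathbf{b})$. Likewise, $\mathbf{v}$ has a neighbor in $C_{s+1}(\mathbf{b})$ if and only if $s<u(\mathbf{b})$, and in this case it has at least $2^k$ neighbors in $C_{s+1}(\mathbf{b})$.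
   Context: $I_k$ is the $k\times k$ identity, $\mathbf{1}_k$ the all-ones vector in $\mathbb{Z}^k$. Define $$A_k=\begin{pmatrix} I_k & I_k & 0 & 0 & -\mathbf{1}_k & \mathbf{0}\\ 0&0&I_k&I_k&\mathbf{0}&-\mathbf{1}_k\\ 0&0&0&0&1&1\end{pmatrix}\in\mathbb{Z}^{(2k+1)\times(4k+2)}$$ (zero blocks of appropriate sizes; last two columns are single columns). Fiber: $\mathcal{F}_A(\mathbf{b})=\{\mathbf{u}\in\mathbb{Z}^n_{\ge0}:A\mathbf{u}=\mathbf{b}\}$. For $\mathcal{M}\subset\mathbb{Z}^n$, $G_{A,\mathbf{b},\mathcal{M}}$ is the graph on $\mathcal{F}_A(\mathbf{b})$ with distinct $\mathbf{u},\mathbf{v}$ adjacent iff $\mathbf{u}-\mathbf{v}\in\pm\mathcal{M}$. The Graver basis $\mathcal{G}(A)$ is the set of $\sqsubseteq$-minimal elements of $(\ker A\cap\mathbb{Z}^n)\setminus\{\mathbf{0}\}$, where $\mathbf{u}\sqsubseteq\mathbf{v}$ iff $u_iv_i\ge0$ and $|u_i|\le|v_i|$ for all $i$. For $\mathbf{w}\in\mathbb{Z}^k$, $\mathbf{w}^-\in\mathbb{Z}^k_{\ge0}$ has entries $\max(-w_i,0)$. For $\mathbf{b}=(\mathbf{w}_1,\mathbf{w}_2,c)$ set $l(\mathbf{b}):=\|\mathbf{w}_1^-\|_\infty$ and $u(\mathbf{b}):=c-\|\mathbf{w}_2^-\|_\infty$. For an integer $s$, $C_s(\mathbf{b}):=\{\mathbf{u}\in\mathcal{F}_{A_k}(\mathbf{b}):u_{4k+1}=s\}$.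 *)

(* Defs.v *)
From HB Require Import structures.
From mathcomp Require Import all_boot all_order all_algebra.
Set Implicit Arguments. Unset Strict Implicit. Unset Printing Implicit Defensive.
Import Order.TTheory GRing.Theory Num.Theory.
Local Open Scope ring_scope.

(* Entry of a column vector at a 0-based nat index (0 outside the range). *)
Definition ent (n : nat) (u : 'cV[int]_n) (j : nat) : int :=
  if @insub nat (fun m => (m < n)%N) 'I_n j is Some i then u i 0 else 0.

(* Entry (i,j) (0-based) of the matrix A_k. Columns: 0..k-1, k..2k-1, 2k..3k-1,
   3k..4k-1 are the four I_k blocks, column 4k and 4k+1 the last two columns. *)
Definition Aentry (k i j : nat) : int :=
  if (i < k)%N then
    (if (j == i) || (j == k + i)%N then 1 else if j == (4 * k)%N then -1 else 0)
  else if (i < 2 * k)%N then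
    (if (j == 2 * k + (i - k))%N || (j == 3 * k + (i - k))%N then 1
     else if j == (4 * k + 1)%N then -1 else 0)
  else
    (if (j == 4 * k)%N || (j == 4 * k + 1)%N then 1 else 0).

Definition A_k (k : nat) : 'M[int]_(2 * k + 1, 4 * k + 2) :=
  \matrix_(i, j) Aentry k i j.

Definition bvec (k : nat) (w1 w2 : 'cV[int]_k) (c : int) : 'cV[int]_(2 * k + 1) :=
  \col_i (if (i < k)%N then ent w1 i
          else if (i < 2 * k)%N then ent w2 (i - k) else c).

Definition in_fiber (m n : nat) (A : 'M[int]_(m, n)) (b : 'cV[int]_m)
  (u : 'cV[int]_n) : Prop :=
  (forall i, 0 <= u i 0) /\ A *m u = b.

Definition conf_le (n : nat) (u v : 'cV[int]_n) : Prop :=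
  forall i, 0 <= u i 0 * v i 0 /\ `|u i 0| <= `|v i 0|.

Definition graver (m n : nat) (A : 'M[int]_(m, n)) (g : 'cV[int]_n) : Prop :=
  A *m g = 0 /\ g <> 0 /\
  (forall h : 'cV[int]_n, A *m h = 0 -> h <> 0 -> conf_le h g -> h = g).

Definition fiber_adj (n : nat) (M : 'cV[int]_n -> Prop) (u v : 'cV[int]_n) : Prop :=
  u <> v /\ (M (u - v) \/ M (- (u - v))).

Definition negnorm (k : nat) (w : 'cV[int]_k) : int :=
  \big[Num.max/0]_(i < k) Num.max (- w i 0) 0.

Definition lb (k : nat) (w1 w2 : 'cV[int]_k) (c : int) : int := negnorm w1.
Definition ub (k : nat) (w1 w2 : 'cV[int]_k) (c : int) : int := c - negnorm w2.

(* C_s(b): fiber elements whose (4k+1)-th coordinate (1-based) equals s *)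
Definition Cs (k : nat) (w1 w2 : 'cV[int]_k) (c s : int) (u : 'cV[int]_(4 * k + 2))
  : Prop :=
  in_fiber (A_k k) (bvec w1 w2 c) u /\ ent u (4 * k) = s.

Definition nbr_in (k : nat) (w1 w2 : 'cV[int]_k) (c t : int)
  (v u : 'cV[int]_(4 * k + 2)) : Prop :=
  fiber_adj (graver (A_k k)) u v /\ Cs w1 w2 c t u.

(* Main.v *)
Require Import Defs.
From HB Require Import structures.
From mathcomp Require Import all_boot all_order all_algebra zify.
Import Order.TTheory GRing.Theory Num.Theory.
Local Open Scope ring_scope.

Lemma ent_val n (u : 'cV[int]_n) (i : 'I_n) : ent u i = u i 0.
Proof. by rewrite /ent valK. Qed.

Lemma ent_out n (u : 'cV[int]_n) j : (n <= j)%N -> ent u j = 0.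
Proof. by move=> h; rewrite /ent insubF // ltnNge h. Qed.

Lemma entB n (u v : 'cV[int]_n) j : ent (u - v) j = ent u j - ent v j.
Proof. by rewrite /ent; case: insubP => [i _ _|_]; rewrite ?mxE ?subr0. Qed.

Lemma entD n (u v : 'cV[int]_n) j : ent (u + v) j = ent u j + ent v j.
Proof. by rewrite /ent; case: insubP => [i _ _|_]; rewrite ?mxE ?addr0. Qed.

Lemma ent0 n j : ent (0 : 'cV[int]_n) j = 0.
Proof. by rewrite /ent; case: insubP => [i _ _|_]; rewrite ?mxE. Qed.

Lemma ent_col n (F : nat -> int) j :
  ent (\col_(i < n) F i) j = if (j < n)%N then F j else 0.
Proof. by rewrite /ent; case: insubP => [i -> <-|/negbTE ->]; rewrite ?mxE. Qed.

Lemma cv_ext n (u v : 'cV[int]_n) : (forall j, ent u j = ent v j) -> u = v.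
Proof. by move=> h; apply/matrixP => i j; rewrite (ord1 j) -!ent_val. Qed.

Lemma sum_ind n (u : 'cV[int]_n) a :
  \sum_(j < n) (((val j == a) : nat)%:R * u j 0) = ent u a.
Proof.
rewrite /ent; case: insubP => [i _ <- | na].
  rewrite (bigD1 i) //= eqxx mul1r big1 ?addr0 // => j ji.
  by rewrite (inj_eq val_inj) (negbTE ji) mul0r.
rewrite big1 // => j _.
have -> : (val j == a) = false.
  by apply/eqP => e; move: na; rewrite -e ltn_ord.
by rewrite mul0r.
Qed.

Lemma Arow k (u : 'cV[int]_(4*k+2)) (n : nat) :
  ent (A_k k *m u) n =
  if (n < 2*k+1)%N then \sum_(j < 4*k+2) Aentry k n j * u j 0 else 0.
Proof.
rewrite /ent; case: insubP => [i -> <-|/negbTE ->] //.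
by rewrite !mxE; apply: eq_bigr => j _; rewrite mxE.
Qed.

Lemma Aent1 k n j : (0<k)%N -> (n<k)%N ->
  Aentry k n j = ((j==n) : nat)%:R + ((j==k+n)%N : nat)%:R - ((j==4*k)%N : nat)%:R.
Proof.
move=> k0 nk; rewrite /Aentry nk.
case: eqP => e1; case: eqP => e2; case: eqP => e3 //=; lia.
Qed.

Lemma Aent2 k n j : (0<k)%N -> (k<=n)%N -> (n<2*k)%N ->
  Aentry k n j = ((j==2*k+(n-k))%N : nat)%:R + ((j==3*k+(n-k))%N : nat)%:R
     - ((j==4*k+1)%N : nat)%:R.
Proof.
move=> k0 kn nk; rewrite /Aentry nk ltnNge kn /=.
case: eqP => e1; case: eqP => e2; case: eqP => e3 //=; lia.
Qed.

Lemma Aent3 k j : (0<k)%N ->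
  Aentry k (2*k) j = ((j==4*k)%N : nat)%:R + ((j==4*k+1)%N : nat)%:R.
Proof.
move=> k0; rewrite /Aentry ltnn.
have -> : (2*k < k)%N = false by apply/negbTE; rewrite -leqNgt; lia.
case: eqP => e1; case: eqP => e2 //=; lia.
Qed.

Lemma Arw1 k (u : 'cV[int]_(4*k+2)) n : (0<k)%N -> (n<k)%N ->
  ent (A_k k *m u) n = ent u n + ent u (k+n) - ent u (4*k).
Proof.
move=> k0 nk; rewrite Arow (_ : (n < 2*k+1)%N = true); last by apply/idP; lia.
rewrite (eq_bigr (fun j : 'I_(4*k+2) => ((val j==n) : nat)%:R * u j 0
   + ((val j==k+n)%N : nat)%:R * u j 0 - ((val j==4*k)%N : nat)%:R * u j 0)); last first.
  by move=> j _; rewrite Aent1 // mulrBl mulrDl.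
by rewrite sumrB big_split /= !sum_ind.
Qed.

Lemma Arw2 k (u : 'cV[int]_(4*k+2)) n : (0<k)%N -> (n<k)%N ->
  ent (A_k k *m u) (k+n) = ent u (2*k+n) + ent u (3*k+n) - ent u (4*k+1).
Proof.
move=> k0 nk; rewrite Arow (_ : (k+n < 2*k+1)%N = true); last by apply/idP; lia.
rewrite (eq_bigr (fun j : 'I_(4*k+2) => ((val j==2*k+n)%N : nat)%:R * u j 0
   + ((val j==3*k+n)%N : nat)%:R * u j 0 - ((val j==4*k+1)%N : nat)%:R * u j 0)); last first.
  move=> j _; rewrite Aent2 //; try lia.
  by rewrite (_ : (k + n - k = n)%N) ?mulrBl ?mulrDl //; lia.
by rewrite sumrB big_split /= !sum_ind.
Qed.

Lemma Arw3 k (u : 'cV[int]_(4*k+2)) : (0<k)%N ->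
  ent (A_k k *m u) (2*k) = ent u (4*k) + ent u (4*k+1).
Proof.
move=> k0; rewrite Arow (_ : (2*k < 2*k+1)%N = true); last by apply/idP; lia.
rewrite (eq_bigr (fun j : 'I_(4*k+2) => ((val j==4*k)%N : nat)%:R * u j 0
   + ((val j==4*k+1)%N : nat)%:R * u j 0)); last first.
  by move=> j _; rewrite Aent3 // mulrDl.
by rewrite big_split /= !sum_ind.
Qed.

Lemma bvec1 k (w1 w2 : 'cV[int]_k) c n : (n < k)%N -> ent (bvec w1 w2 c) n = ent w1 n.
Proof.
move=> nk; rewrite /bvec /ent; case: insubP => [i _ e|]; last by move=> /negP; case; lia.
by rewrite mxE e nk.
Qed.

Lemma bvec2 k (w1 w2 : 'cV[int]_k) c n : (n < k)%N -> ent (bvec w1 w2 c) (k+n) = ent w2 n.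
Proof.
move=> nk; rewrite /bvec /ent; case: insubP => [i _ e|]; last by move=> /negP; case; lia.
rewrite mxE e (_ : (k+n < k)%N = false); last by apply/negbTE; lia.
by rewrite (_ : (k+n < 2*k)%N = true) ?addKn //; apply/idP; lia.
Qed.

Lemma bvec3 k (w1 w2 : 'cV[int]_k) c : ent (bvec w1 w2 c) (2*k) = c.
Proof.
rewrite /bvec /ent; case: insubP => [i _ e|]; last by move=> /negP; case; lia.
rewrite mxE e (_ : (2*k < k)%N = false); last by apply/negbTE; lia.
by rewrite ltnn.
Qed.

Definition sys k (w1 w2 : 'cV[int]_k) c (u : 'cV[int]_(4*k+2)) : Prop :=
  (forall n, (n < k)%N -> ent u n + ent u (k+n) - ent u (4*k) = ent w1 n) /\
  (forall n, (n < k)%N -> ent u (2*k+n) + ent u (3*k+n) - ent u (4*k+1) = ent w2 n) /\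
  ent u (4*k) + ent u (4*k+1) = c.
Arguments sys {k}.

Lemma sysP k (w1 w2 : 'cV[int]_k) c (u : 'cV[int]_(4*k+2)) : (0 < k)%N ->
  A_k k *m u = bvec w1 w2 c -> sys w1 w2 c u.
Proof.
move=> k0 e; split; [|split].
- by move=> n nk; rewrite -Arw1 // e bvec1.
- by move=> n nk; rewrite -Arw2 // e bvec2.
- by rewrite -Arw3 // e bvec3.
Qed.

Lemma sys0 k (u : 'cV[int]_(4*k+2)) : (0 < k)%N ->
  (forall n, (n < k)%N -> ent u n + ent u (k+n) - ent u (4*k) = 0) ->
  (forall n, (n < k)%N -> ent u (2*k+n) + ent u (3*k+n) - ent u (4*k+1) = 0) ->
  ent u (4*k) + ent u (4*k+1) = 0 -> A_k k *m u = 0.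
Proof.
move=> k0 h1 h2 h3; apply: cv_ext => n; rewrite ent0.
case: (ltnP n k) => [nk|kn]; first by rewrite Arw1 // h1.
case: (ltnP n (2*k)) => [nk2|kn2].
  by rewrite (_ : n = k + (n - k))%N ?Arw2 ?h2 //; lia.
case: (ltnP n (2*k+1)) => [nk3|kn3].
  by rewrite (_ : n = 2*k)%N ?Arw3 //; lia.
by rewrite ent_out.
Qed.

Ltac ifs := repeat match goal with
  | |- context [if (?x < ?y)%N then _ else _] =>
     first [rewrite (_ : (x < y)%N = true); last by apply/idP; lia
           | rewrite (_ : (x < y)%N = false); last by apply/negbTE; lia]
  | |- context [if (?x == ?y)%N then _ else _] =>
     first [rewrite (_ : (x == y)%N = true); last by apply/eqP; lia
           | rewrite (_ : (x == y)%N = false); last by apply/negbTE/eqP; lia]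
  end.

Definition bi (b : bool) : int := if b then 1 else 0.

Definition gent k (a b : nat -> bool) (n : nat) : int :=
  if (n < k)%N then bi (a n)
  else if (n < 2*k)%N then bi (~~ a (n-k)%N)
  else if (n < 3*k)%N then - bi (b (n-2*k)%N)
  else if (n < 4*k)%N then - bi (~~ b (n-3*k)%N)
  else if (n == 4*k)%N then 1 else -1.

Definition gcol k a b : 'cV[int]_(4*k+2) := \col_(i < 4*k+2) gent k a b i.

Section G.
Variables (k : nat) (a b : nat -> bool) (k0 : (0 < k)%N).

Lemma gE1 i : (i < k)%N -> ent (gcol k a b) i = bi (a i).
Proof. by move=> ik; rewrite ent_col /gent; ifs. Qed.
Lemma gE2 i : (i < k)%N -> ent (gcol k a b) (k+i) = bi (~~ a i).
Proof. by move=> ik; rewrite ent_col /gent; ifs; rewrite addKn. Qed.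
Lemma gE3 i : (i < k)%N -> ent (gcol k a b) (2*k+i) = - bi (b i).
Proof. by move=> ik; rewrite ent_col /gent; ifs; rewrite addKn. Qed.
Lemma gE4 i : (i < k)%N -> ent (gcol k a b) (3*k+i) = - bi (~~ b i).
Proof. by move=> ik; rewrite ent_col /gent; ifs; rewrite addKn. Qed.
Lemma gE5 : ent (gcol k a b) (4*k) = 1.
Proof. by rewrite ent_col /gent; ifs. Qed.
Lemma gE6 : ent (gcol k a b) (4*k+1) = -1.
Proof. by rewrite ent_col /gent; ifs. Qed.
Lemma gE7 n : (4*k+2 <= n)%N -> ent (gcol k a b) n = 0.
Proof. by move=> h; rewrite ent_out. Qed.

Lemma g_ker : A_k k *m gcol k a b = 0.
Proof.
apply: sys0 => // [n nk|n nk|]; last by rewrite gE5 gE6.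
  by rewrite gE1 // gE2 // gE5; case: (a n).
by rewrite gE3 // gE4 // gE6; case: (b n).
Qed.

Lemma conf_ent n (h g : 'cV[int]_n) : conf_le h g -> forall j,
  0 <= ent h j * ent g j /\ `|ent h j| <= `|ent g j|.
Proof.
move=> hc j; case: (ltnP j n) => jn.
  have e1 := ent_val _ h (Ordinal jn); have e2 := ent_val _ g (Ordinal jn).
  simpl in e1, e2; rewrite e1 e2; exact: hc.
by rewrite !ent_out.
Qed.

Lemma g_graver : graver (A_k k) (gcol k a b).
Proof.
split; first exact: g_ker.
split.
  by move=> e; have := gE5; rewrite e ent0.
move=> h hA hnz hc.
have cf := @conf_ent _ _ _ hc.
have R1 n : (n < k)%N -> ent h n + ent h (k+n) - ent h (4*k) = 0.
  by move=> nk; rewrite -(@Arw1 k h n k0 nk) hA ent0.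
have R2 n : (n < k)%N -> ent h (2*k+n) + ent h (3*k+n) - ent h (4*k+1) = 0.
  by move=> nk; rewrite -(@Arw2 k h n k0 nk) hA ent0.
have R3 : ent h (4*k) + ent h (4*k+1) = 0 by rewrite -(@Arw3 k h k0) hA ent0.
set t := ent h (4*k).
have ht : t = 0 \/ t = 1.
  by have [] := cf (4*k)%N; rewrite gE5 -/t; lia.
have claim n : ent h n = t * ent (gcol k a b) n.
  case: (ltnP n k) => [nk|kn].
    have := R1 n nk; have [] := cf n; have [] := cf (k+n)%N.
    rewrite (gE1 _ nk) (gE2 _ nk) -/t. case: (a n) => /=; lia.
  case: (ltnP n (2*k)) => [nk2|kn2].
    have -> : n = (k + (n - k))%N by lia.
    have nk : (n - k < k)%N by lia.
    have := R1 _ nk; have [] := cf (n-k)%N; have [] := cf (k+(n-k))%N.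
    by rewrite (gE1 _ nk) (gE2 _ nk) -/t; case: (a (n-k)%N) => /=; lia.
  case: (ltnP n (3*k)) => [nk3|kn3].
    have -> : n = (2*k + (n - 2*k))%N by lia.
    have nk : (n - 2*k < k)%N by lia.
    have := R2 _ nk; have [] := cf (2*k+(n-2*k))%N; have [] := cf (3*k+(n-2*k))%N.
    by rewrite (gE3 _ nk) (gE4 _ nk) -/t; case: (b (n-2*k)%N) => /=; lia.
  case: (ltnP n (4*k)) => [nk4|kn4].
    have -> : n = (3*k + (n - 3*k))%N by lia.
    have nk : (n - 3*k < k)%N by lia.
    have := R2 _ nk; have [] := cf (2*k+(n-3*k))%N; have [] := cf (3*k+(n-3*k))%N.
    by rewrite (gE3 _ nk) (gE4 _ nk) -/t; case: (b (n-3*k)%N) => /=; lia.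
  case: (ltnP n (4*k+1)) => [nk5|kn5].
    have -> : n = (4*k)%N by lia.
    by rewrite gE5 mulr1.
  case: (ltnP n (4*k+2)) => [nk6|kn6].
    have -> : n = (4*k+1)%N by lia.
    rewrite gE6; lia.
  by rewrite !ent_out ?mulr0.
case: ht => ht.
  by exfalso; apply: hnz; apply: cv_ext => n; rewrite claim ht mul0r ent0.
by apply: cv_ext => n; rewrite claim ht mul1r.
Qed.

End G.

Lemma nn_ge0 k (w : 'cV[int]_k) : 0 <= negnorm w.
Proof.
rewrite /negnorm; apply: (big_ind (fun x : int => 0 <= x)) => //.
  by move=> x y hx hy; rewrite le_max hx.
by move=> i _; rewrite le_max lexx orbT.
Qed.

Lemma nn_ge k (w : 'cV[int]_k) i : (i < k)%N -> - ent w i <= negnorm w.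
Proof.
move=> ik; rewrite /negnorm (bigD1 (Ordinal ik)) //=.
by rewrite -(ent_val _ w (Ordinal ik)) /= !le_max lexx.
Qed.

Lemma nn_le k (w : 'cV[int]_k) x : 0 <= x ->
  (forall i, (i < k)%N -> - ent w i <= x) -> negnorm w <= x.
Proof.
move=> x0 h; rewrite /negnorm; apply: (big_ind (fun y : int => y <= x)) => //.
  by move=> y z hy hz; rewrite ge_max hy.
by move=> i _; rewrite ge_max x0 andbT -(ent_val _ w i) h.
Qed.

Lemma ent_ge0 n (u : 'cV[int]_n) : (forall i, 0 <= u i 0) -> forall j, 0 <= ent u j.
Proof. by move=> h j; rewrite /ent; case: insubP. Qed.

Lemma ge0_ent n (u : 'cV[int]_n) : (forall j, 0 <= ent u j) -> forall i, 0 <= u i 0.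
Proof. by move=> h i; rewrite -ent_val. Qed.

Lemma nonneg_of k (u : 'cV[int]_(4*k+2)) :
  (forall i, (i < k)%N -> [/\ 0 <= ent u i, 0 <= ent u (k+i),
      0 <= ent u (2*k+i) & 0 <= ent u (3*k+i)]) ->
  0 <= ent u (4*k) -> 0 <= ent u (4*k+1) -> forall j, 0 <= ent u j.
Proof.
move=> h h4 h5 j.
case: (ltnP j k) => [jk|kj]; first by have [] := h j jk.
case: (ltnP j (2*k)) => [jk2|kj2].
  have -> : j = (k + (j - k))%N by lia.
  by have [] := h (j - k)%N ltac:(lia).
case: (ltnP j (3*k)) => [jk3|kj3].
  have -> : j = (2*k + (j - 2*k))%N by lia.
  by have [] := h (j - 2*k)%N ltac:(lia).
case: (ltnP j (4*k)) => [jk4|kj4].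
  have -> : j = (3*k + (j - 3*k))%N by lia.
  by have [] := h (j - 3*k)%N ltac:(lia).
case: (ltnP j (4*k+1)) => [jk5|kj5]; first by have -> : j = (4*k)%N by lia.
case: (ltnP j (4*k+2)) => [jk6|kj6]; first by have -> : j = (4*k+1)%N by lia.
by rewrite ent_out.
Qed.

Lemma fiber_bounds k (hk : (1 <= k)%N) (w1 w2 : 'cV[int]_k) c u :
  in_fiber (A_k k) (bvec w1 w2 c) u ->
  lb w1 w2 c <= ent u (4*k) /\ ent u (4*k) <= ub w1 w2 c.
Proof.
move=> [hu hA]; have [S1 [S2 S3]] := @sysP k w1 w2 c u hk hA.
have U := @ent_ge0 _ u hu.
split.
  apply: nn_le; first exact: U.
  by move=> i ik; have := S1 i ik; have := U i; have := U (k+i)%N; lia.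
rewrite /ub; suff : negnorm w2 <= ent u (4*k+1) by lia.
apply: nn_le; first exact: U.
by move=> i ik; have := S2 i ik; have := U (2*k+i)%N; have := U (3*k+i)%N; lia.
Qed.

Definition fb k (f : {ffun 'I_k -> bool}) (n : nat) : bool :=
  if @insub nat (fun m => (m < k)%N) 'I_k n is Some i then f i else false.

Lemma fbE k (f : {ffun 'I_k -> bool}) (i : 'I_k) : fb k f i = f i.
Proof. by rewrite /fb valK. Qed.

Lemma bi_inj : injective bi.
Proof. by case; case. Qed.

Lemma list_ex (T : eqType) (P : T -> Prop) k :
  (exists us : seq T, uniq us /\ size us = (2 ^ k)%N /\ (forall u, u \in us -> P u)) ->
  exists u, P u.
Proof.
move=> [[|x us] [_ [hs h]]].
  by move: hs => /= /esym /eqP; rewrite expn_eq0.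
by exists x; apply: h; rewrite inE eqxx.
Qed.

Theorem proposition2 (k : nat) (hk : (1 <= k)%N) (w1 w2 : 'cV[int]_k) (c : int)
  (hF : exists u, in_fiber (A_k k) (bvec w1 w2 c) u)
  (s : int) (hs : lb w1 w2 c <= s <= ub w1 w2 c)
  (v : 'cV[int]_(4 * k + 2)) (hv : Cs w1 w2 c s v) :
  ((exists u, nbr_in w1 w2 c (s - 1) v u) <-> lb w1 w2 c < s) /\
  (lb w1 w2 c < s ->
     exists us : seq 'cV[int]_(4 * k + 2),
       uniq us /\ size us = (2 ^ k)%N /\ (forall u, u \in us -> nbr_in w1 w2 c (s - 1) v u)) /\
  ((exists u, nbr_in w1 w2 c (s + 1) v u) <-> s < ub w1 w2 c) /\
  (s < ub w1 w2 c ->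
     exists us : seq 'cV[int]_(4 * k + 2),
       uniq us /\ size us = (2 ^ k)%N /\ (forall u, u \in us -> nbr_in w1 w2 c (s + 1) v u)).
Proof.
have [[hv0 hvA] hv4] := hv.
have [S1 [S2 S3]] := @sysP k w1 w2 c v hk hvA.
have V := @ent_ge0 _ v hv0.
have lb0 : 0 <= negnorm w1 := @nn_ge0 _ w1.
have ub0 : 0 <= negnorm w2 := @nn_ge0 _ w2.
have N1 i : (i < k)%N -> - ent w1 i <= negnorm w1 := fun ik => @nn_ge _ w1 i ik.
have N2 i : (i < k)%N -> - ent w2 i <= negnorm w2 := fun ik => @nn_ge _ w2 i ik.
have down : lb w1 w2 c < s -> exists us : seq 'cV[int]_(4 * k + 2),
       uniq us /\ size us = (2 ^ k)%N /\ (forall u, u \in us -> nbr_in w1 w2 c (s - 1) v u).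
  rewrite /lb => hls.
  pose a := fun n => (0 < ent v n).
  exists [seq v - gcol k a (fb k f) | f <- enum {ffun 'I_k -> bool}].
  split; [|split].
  - rewrite map_inj_uniq ?enum_uniq // => f1 f2 e.
    apply/ffunP => i.
    have := congr1 (fun x => ent x (2*k+i)%N) e.
    rewrite /= !entB !(gE3 _ _ _ hk _ (ltn_ord i)) !fbE => e'.
    by apply: bi_inj; lia.
  - by rewrite size_map -cardT card_ffun card_bool card_ord.
  - move=> u /mapP [f _ ->].
    split.
    + split.
      * move=> e; have := congr1 (fun x => ent x (4*k)%N) e.
        by rewrite /= entB gE5 //; lia.
      * by right; rewrite opprB subKr; exact: g_graver.
    + split; last by rewrite entB gE5 // hv4.
      split; last by rewrite mulmxBr hvA g_ker // subr0.
      apply: ge0_ent; apply: nonneg_of.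
      * move=> i ik; rewrite !entB (gE1 _ _ _ hk _ ik) (gE2 _ _ _ hk _ ik).
        rewrite (gE3 _ _ _ hk _ ik) (gE4 _ _ _ hk _ ik).
        have := S1 i ik; have := V i; have := V (k+i)%N; have := V (2*k+i)%N.
        have := V (3*k+i)%N; have := N1 i ik.
        rewrite /a /=; case: (fb k f i); case: (boolP (0 < ent v i)) => /= h;
          try rewrite -leNgt in h; split; lia.
      * by rewrite entB gE5 // hv4; lia.
      * by rewrite entB gE6 //; have := V (4*k+1)%N; lia.
have up : s < ub w1 w2 c -> exists us : seq 'cV[int]_(4 * k + 2),
       uniq us /\ size us = (2 ^ k)%N /\ (forall u, u \in us -> nbr_in w1 w2 c (s + 1) v u).
  rewrite /ub => hus.
  pose bb := fun n => (0 < ent v (2*k+n)%N).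
  exists [seq v + gcol k (fb k f) bb | f <- enum {ffun 'I_k -> bool}].
  split; [|split].
  - rewrite map_inj_uniq ?enum_uniq // => f1 f2 e.
    apply/ffunP => i.
    have := congr1 (fun x => ent x i) e.
    rewrite /= !entD !(gE1 _ _ _ hk _ (ltn_ord i)) !fbE => e'.
    by apply: bi_inj; lia.
  - by rewrite size_map -cardT card_ffun card_bool card_ord.
  - move=> u /mapP [f _ ->].
    split.
    + split.
      * move=> e; have := congr1 (fun x => ent x (4*k)%N) e.
        by rewrite /= entD gE5 //; lia.
      * by left; rewrite addrC addKr; exact: g_graver.
    + split; last by rewrite entD gE5 // hv4.
      split; last by rewrite mulmxDr hvA g_ker // addr0.
      apply: ge0_ent; apply: nonneg_of.
      * move=> i ik; rewrite !entD (gE1 _ _ _ hk _ ik) (gE2 _ _ _ hk _ ik).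
        rewrite (gE3 _ _ _ hk _ ik) (gE4 _ _ _ hk _ ik).
        have := S2 i ik; have := V i; have := V (k+i)%N; have := V (2*k+i)%N.
        have := V (3*k+i)%N; have := N2 i ik.
        rewrite /bb /=; case: (fb k f i); case: (boolP (0 < ent v (2*k+i)%N)) => /= h;
          try rewrite -leNgt in h; split; lia.
      * by rewrite entD gE5 // hv4; have := V (4*k)%N; lia.
      * by rewrite entD gE6 //; lia.
split; [split|split; [exact: down|split; [split|exact: up]]].
- move=> [u [_ [hu hu4]]]; have [hl _] := @fiber_bounds k hk w1 w2 c u hu.
  by rewrite hu4 in hl; lia.
- by move=> h; apply: (@list_ex _ _ k); apply: down.
- move=> [u [_ [hu hu4]]]; have [_ hl] := @fiber_bounds k hk w1 w2 c u hu.
  by rewrite hu4 in hl; lia.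
- by move=> h; apply: (@list_ex _ _ k); apply: up.
Qed.
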